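(* For every $n\ge1$, let $\alpha_n$ be the minimal real zero of $\phi_n(x)$. Then $\mathrm{QEC}(K_1+P_n)=-2\alpha_n-2$.
   Context: For a finite connected graph $G=(V,E)$ with $|V|\ge2$, let $d(i,j)$ be the graph distance and $D=[d(i,j)]_{i,j\in V}$ the distance matrix. The quadratic embedding constant is $\mathrm{QEC}(G)=\max\{\langle f,Df\rangle : f\in\mathbb{R}^V,\ \langle f,f\rangle=1,\ \langle\mathbf 1,f\rangle=0\}$, where $\mathbf 1$ is the all-ones vector. The fan graph $K_1+P_n$ has vertex set $\{0,1,\dots,n\}$ and edges $\{i,i+1\}$ ($1\le i\le n-1$) and $\{0,i\}$ ($1\le i\le n$). $U_n(x)$ is the Chebyshev polynomial of the second kind ($U_n(\cos\theta)=\sin((n+1)\theta)/\sin\theta$, $U_{-1}=0$), and $\phi_n(x)=((n+1)x^2-3x-n)U_n(x)+(x+1)(U_{n-1}(x)+1)$, a polynomial of degree $n+2$ all of whose zeros are real. *)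

(* Defs.v *)
From HB Require Import structures.
From mathcomp Require Import all_boot all_order all_algebra.
From mathcomp Require Import classical_sets reals.
Set Implicit Arguments. Unset Strict Implicit. Unset Printing Implicit Defensive.
Import Order.TTheory GRing.Theory Num.Theory.
Local Open Scope ring_scope.

Section Graph.
Variable T : finType.
Variable e : rel T.

Fixpoint ball (i : T) (k : nat) : {set T} :=
  match k with
  | 0 => [set i]
  | k'.+1 => ball i k' :|: [set y | [exists x in ball i k', e x y]]
  end.

(* graph distance: least k such that j is within k steps of i
   (for a connected graph on T this is < #|T|). *)
Definition gdist (i j : T) : nat :=
  find (fun k => j \in ball i k) (iota 0 #|T|).
End Graph.

(* The fan graph K_1 + P_n on vertex set {0,...,n} = 'I_n.+1:
   edges {i,i+1} (1 <= i <= n-1) and {0,i} (1 <= i <= n). *)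
Definition fan_adj (n : nat) : rel 'I_n.+1 :=
  fun x y =>
    [|| ((x == 0%N :> nat) && (y != 0%N :> nat)),
        ((y == 0%N :> nat) && (x != 0%N :> nat)),
        ((x != 0%N :> nat) && (y == x.+1 :> nat))
      | ((y != 0%N :> nat) && (x == y.+1 :> nat))].

Definition fan_distmx (R : realType) (n : nat) : 'M[R]_n.+1 :=
  \matrix_(i, j) (gdist (@fan_adj n) i j)%:R.

(* quadratic embedding constant of a graph with distance matrix D:
   max { <f, D f> : <f,f> = 1, <1,f> = 0 } (the max exists by compactness,
   so it coincides with the supremum). *)
Definition QEC (R : realType) (m : nat) (D : 'M[R]_m) : R :=
  sup [set q | exists f : 'cV[R]_m,
        [/\ (f^T *m f) 0 0 = 1, \sum_i f i 0 = 0 & q = (f^T *m D *m f) 0 0]].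

(* Chebyshev polynomials of the second kind: U_0 = 1, U_1 = 2X,
   U_{k+2} = 2X U_{k+1} - U_k. chebU2 k = (U_k, U_{k+1}). *)
Fixpoint chebU2 (R : ringType) (k : nat) : {poly R} * {poly R} :=
  match k with
  | 0 => (1, 2%:R *: 'X)
  | k'.+1 => let: (a, b) := @chebU2 R k' in (b, 2%:R *: 'X * b - a)
  end.
Definition chebU (R : ringType) (k : nat) : {poly R} := (@chebU2 R k).1.

Definition phi (R : ringType) (n : nat) : {poly R} :=
  (n.+1%:R *: 'X^2 - 3%:R *: 'X - n%:R%:P) * @chebU R n
  + ('X + 1) * (@chebU R n.-1 + 1).

(* Main.v *)
Require Import Defs.
From HB Require Import structures.
From mathcomp Require Import all_boot all_order all_algebra.
From mathcomp Require Import classical_sets reals.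
From mathcomp Require Import ring lra zify.
Import Order.TTheory GRing.Theory Num.Theory.
Set Implicit Arguments. Unset Strict Implicit. Unset Printing Implicit Defensive.
Local Open Scope ring_scope.

Section Cheb.
Variable R : realType.
Variable x : R.

Fixpoint uu (k : nat) : R * R :=
  match k with
  | 0 => (0, 1)
  | k'.+1 => let: (a, b) := uu k' in (b, 2 * x * b - a)
  end.
Definition u k := (uu k).1.

Lemma u0 : u 0 = 0. Proof. by []. Qed.
Lemma u1 : u 1 = 1. Proof. by []. Qed.
Lemma uS k : u k.+2 = 2 * x * u k.+1 - u k.
Proof. by rewrite /u /=; case: (uu k). Qed.

Fixpoint wws (k : nat) : R * R :=
  match k with
  | 0 => (0, 0)
  | k'.+1 => let: (a, b) := wws k' in (b, 2 * x * b - a + 1)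
  end.
Definition ws k := (wws k).1.
Lemma ws0 : ws 0 = 0. Proof. by []. Qed.
Lemma ws1 : ws 1 = 0. Proof. by []. Qed.
Lemma wsS k : ws k.+2 = 2 * x * ws k.+1 - ws k + 1.
Proof. by rewrite /ws /=; case: (wws k). Qed.

Lemma cheb_eval k : (chebU2 R k).1.[x] = u k.+1 /\ (chebU2 R k).2.[x] = u k.+2.
Proof.
elim: k => [|k [IH1 IH2]] /=.
  by rewrite /u /= !hornerE; split=> //; ring.
move: IH1 IH2; case: (chebU2 R k) => a b /= IH1 IH2.
split=> //; rewrite uS -IH1 -IH2 !hornerE; ring.
Qed.

Lemma chebU_eval k : (chebU R k).[x] = u k.+1.
Proof. by case: (cheb_eval k). Qed.

Lemma ws_closed m : 2 * (x - 1) * ws m.+1 = u m.+1 - u m - 1.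
Proof.
have H : forall m, 2 * (x - 1) * ws m.+1 = u m.+1 - u m - 1 /\
                   2 * (x - 1) * ws m.+2 = u m.+2 - u m.+1 - 1.
  elim=> [|k [IH1 IH2]]; first by rewrite ws1 wsS ws1 ws0 uS u1 u0; split; ring.
  split=> //; rewrite wsS (uS k.+1).
  transitivity (2 * x * (2 * (x - 1) * ws k.+2) - 2 * (x - 1) * ws k.+1 + 2 * (x - 1)); first by ring.
  rewrite IH1 IH2 (uS k); ring.
by case: (H m).
Qed.

Lemma sum_u m : 2 * (x - 1) * \sum_(i < m.+1) u i = u m.+1 - u m - 1.
Proof.
elim: m => [|m IH]; first by rewrite big_ord1 u0 u1; ring.
rewrite big_ord_recr /= mulrDr IH uS; ring.
Qed.

Lemma sum_ws m : 2 * (x - 1) * \sum_(i < m.+1) ws i = u m - m%:R.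
Proof.
elim: m => [|m IH]; first by rewrite big_ord1 ws0 u0; ring.
rewrite big_ord_recr /= mulrDr IH ws_closed -natr1; lra.
Qed.

Lemma cassini m : u m.+1 ^+ 2 - 2 * x * u m.+1 * u m + u m ^+ 2 = 1.
Proof.
elim: m => [|m IH]; first by rewrite u1 u0; ring.
rewrite uS; rewrite -[RHS]IH; ring.
Qed.

Lemma ws_diff m : ws m.+1 - ws m = u m.
Proof.
have H : forall m, ws m.+1 - ws m = u m /\ ws m.+2 - ws m.+1 = u m.+1.
  elim=> [|k [IH1 IH2]]; first by rewrite wsS ws1 ws0 u0 u1; split; ring.
  split=> //; rewrite wsS (wsS k) uS -IH1 -IH2 wsS; ring.
by case: (H m).
Qed.

Lemma sum_u_ws m : \sum_(i < m.+1) u i = ws m.+1.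
Proof.
elim: m => [|m IH]; first by rewrite big_ord1 u0 ws1.
by rewrite big_ord_recr /= IH -(ws_diff m.+1); ring.
Qed.

Definition Pc N := ws N.+2.
Definition Zc N := \sum_(i < N.+2) ws i.
Definition detc N := u N.+2 * ((2 * x + 2) * Zc N - 1) - (2 * x + 2) * Pc N ^+ 2.

Lemma phi_eval N : (phi R N.+1).[x] =
  ((N.+2)%:R * x ^+ 2 - 3 * x - (N.+1)%:R) * u N.+2 + (x + 1) * (u N.+1 + 1).
Proof.
rewrite /phi !hornerE !chebU_eval /=.
ring.
Qed.

Lemma alg_id (a b P Z m : R) : 2 * (x - 1) * P = a - b - 1 ->
  2 * (x - 1) * Z = b - m -> a ^+ 2 - 2 * x * a * b + b ^+ 2 = 1 ->
  2 * (x - 1) ^+ 2 * (a * ((2 * x + 2) * Z - 1) - (2 * x + 2) * P ^+ 2) =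
  - 2 * (((m + 1) * x ^+ 2 - 3 * x - m) * a + (x + 1) * (b + 1)).
Proof.
move=> hP hZ hC.
transitivity ((x - 1) * (2 * x + 2) * a * (2 * (x - 1) * Z) - 2 * (x - 1) ^+ 2 * a
   - (x + 1) * (2 * (x - 1) * P) ^+ 2); first by ring.
rewrite hP hZ.
transitivity (- 2 * (((m + 1) * x ^+ 2 - 3 * x - m) * a + (x + 1) * (b + 1))
   - (x + 1) * (a ^+ 2 - 2 * x * a * b + b ^+ 2 - 1)); last by rewrite hC subrr mulr0 subr0.
ring.
Qed.

Lemma key N : 2 * (x - 1) ^+ 2 * detc N = - 2 * (phi R N.+1).[x].
Proof.
rewrite phi_eval /detc /Pc /Zc -(natr1 N.+1).
apply: alg_id; [exact: ws_closed | exact: sum_ws | exact: cassini].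
Qed.
End Cheb.


Section Quad.
Variable R : realType.
Variable n : nat.
Implicit Types (M : 'M[R]_n) (v : 'rV[R]_n).

Definition q M v : R := (v *m M *m v^T) 0 0.
Definition sq v : R := \sum_i v 0 i ^+ 2.

Lemma qE M v : q M v = \sum_i \sum_j v 0 i * M i j * v 0 j.
Proof.
rewrite /q mxE [RHS]exchange_big; apply: eq_bigr => j _; rewrite !mxE mulr_suml.
by apply: eq_bigr => i _; rewrite ?mxE.
Qed.

Lemma qD M1 M2 v : q (M1 + M2) v = q M1 v + q M2 v.
Proof.
rewrite !qE -big_split; apply: eq_bigr => i _; rewrite -big_split; apply: eq_bigr => j _.
by rewrite mxE mulrDr mulrDl.
Qed.

Lemma qZ a M v : q (a *: M) v = a * q M v.
Proof. by rewrite !qE mulr_sumr; apply: eq_bigr => i _; rewrite mulr_sumr; apply: eq_bigr => j _; rewrite mxE; ring. Qed.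

Lemma qvZ a M v : q M (a *: v) = a ^+ 2 * q M v.
Proof. by rewrite !qE mulr_sumr; apply: eq_bigr => i _; rewrite mulr_sumr; apply: eq_bigr => j _; rewrite !mxE; ring. Qed.

Lemma q_scalar a v : q a%:M v = a * sq v.
Proof.
rewrite qE /sq mulr_sumr; apply: eq_bigr => i _.
rewrite (bigD1 i) //= big1 ?addr0; first by rewrite mxE eqxx mulr1n; ring.
by move=> j /negbTE ji; rewrite mxE eq_sym ji mulr0n mulr0 mul0r.
Qed.

Lemma q_const v : q (const_mx 1) v = (\sum_i v 0 i) ^+ 2.
Proof.
rewrite qE expr2 mulr_suml; apply: eq_bigr => i _; rewrite mulr_sumr.
by apply: eq_bigr => j _; rewrite mxE mulr1.
Qed.

Lemma sq_ge0 v : 0 <= sq v.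
Proof. by apply: sumr_ge0 => i _; exact: sqr_ge0. Qed.

Lemma sq_ge v i : v 0 i ^+ 2 <= sq v.
Proof.
rewrite /sq (bigD1 i) //= lerDl; apply: sumr_ge0 => j _; exact: sqr_ge0.
Qed.

Lemma sq_eq0 v : sq v = 0 -> v = 0.
Proof.
move=> h; apply/matrixP => i j; rewrite (ord1 i) mxE.
have := sq_ge v j; rewrite h => hj.
have : v 0 j ^+ 2 = 0 by apply/eqP; rewrite eq_le hj sqr_ge0.
by move/eqP; rewrite sqrf_eq0 => /eqP.
Qed.

Lemma q_bound M v : `|q M v| <= (\sum_i \sum_j `|M i j|) * sq v.
Proof.
rewrite qE mulr_suml; apply: (le_trans (ler_norm_sum _ _ _)).
apply: ler_sum => i _; rewrite mulr_suml.
apply: (le_trans (ler_norm_sum _ _ _)); apply: ler_sum => j _.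
have hi := sq_ge v i; have hj := sq_ge v j.
have h2 : `|v 0 i * v 0 j| <= sq v.
  rewrite normrM.
  have := sqr_ge0 (`|v 0 i| - `|v 0 j|).
  rewrite -(real_normK (num_real (v 0 i))) -(real_normK (num_real (v 0 j))) in hi hj.
  move: (normr_ge0 (v 0 i)) (normr_ge0 (v 0 j)) => a0 b0; nra.
rewrite [_ * M i j]mulrC -mulrA normrM ler_wpM2l //.
Qed.

Definition bil M (h v : 'rV[R]_n) : R := (h *m M *m v^T) 0 0.

Lemma bil_sym M h v : M^T = M -> bil M h v = bil M v h.
Proof.
move=> hM; rewrite /bil.
transitivity ((h *m M *m v^T)^T 0 0); first by rewrite [in RHS]mxE.
by rewrite !trmx_mul trmxK hM mulmxA.
Qed.

Lemma q_sum M h v t : q M (h + t *: v) = q M h + t * (bil M h v + bil M v h) + t ^+ 2 * q M v.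
Proof.
rewrite /q /bil linearD /= linearZ /= !mulmxDl !mulmxDr.
rewrite -?scalemxAr -?scalemxAl -?scalemxAr -?scalemxAl -?scalemxAr -?scalemxAl -?scalemxAr.
set a1 := h *m M *m h^T; set a2 := v *m M *m h^T; set a3 := h *m M *m v^T; set a4 := v *m M *m v^T.
rewrite !mxE; ring.
Qed.

Lemma cs M h v : M^T = M -> (forall w, 0 <= q M w) -> bil M h v ^+ 2 <= q M h * q M v.
Proof.
move=> hM psd; have hs := bil_sym h v hM.
have H t : 0 <= q M h + 2 * t * bil M h v + t ^+ 2 * q M v.
  by have := psd (h + t *: v); rewrite q_sum -hs; lra.
set b := bil M h v in H *; set a := q M h in H *; set c := q M v in H *.
have c0 : 0 <= c by apply: psd.
have a0 : 0 <= a by apply: psd.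
have [cgt|c_eq] := ltrP 0 c.
  have := H (- b / c).
  have -> : a + 2 * (- b / c) * b + (- b / c) ^+ 2 * c = a - b ^+ 2 / c.
    by field; rewrite gt_eqF.
  by rewrite subr_ge0 ler_pdivrMr // mulrC.
have c00 : c = 0 by apply/eqP; rewrite eq_le c_eq c0.
rewrite c00 mulr0.
have [b0|bn0] := eqVneq b 0; first by rewrite b0 expr0n.
have := H (- (a + 1) / (2 * b)).
rewrite c00 mulr0 addr0.
have -> : a + 2 * (- (a + 1) / (2 * b)) * b = -1.
  by field.
by rewrite ler0N1.
Qed.

Lemma sqE v : (v *m v^T) 0 0 = sq v.
Proof. by rewrite /sq mxE; apply: eq_bigr => i _; rewrite mxE expr2. Qed.

Lemma margin K : K^T = K -> (forall w, 0 <= q K w) -> K \in unitmx ->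
  exists2 eps : R, 0 < eps & forall v, eps * sq v <= q K v.
Proof.
move=> hK psd uK.
set N := invmx K.
set cN := \sum_i \sum_j `|N^T i j|.
have cN0 : 0 <= cN by apply: sumr_ge0 => i _; apply: sumr_ge0 => j _.
exists (cN + 1)^-1; first by rewrite invr_gt0; lra.
move=> v.
set h := v *m N.
have hK' : h *m K = v by rewrite /h -mulmxA mulVmx // mulmx1.
have hb : bil K h v = sq v by rewrite /bil hK' sqE.
have hq : q K h = q N^T v.
  by rewrite /q hK' /h trmx_mul mulmxA.
have := cs h v hK psd; rewrite hb hq => H.
have hB := q_bound N^T v; rewrite -/cN in hB.
have hqv := psd v.
have hsv := sq_ge0 v.
have hB2 : q N^T v <= cN * sq v by apply: le_trans (ler_norm _) hB.
rewrite mulrC ler_pdivrMr; last lra.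
have [->|sgt] := eqVneq (sq v) 0; first by rewrite mulr_ge0 //; lra.
have sp : 0 < sq v by rewrite lt0r sgt hsv.
have : sq v ^+ 2 <= cN * sq v * q K v.
  apply: le_trans H _; apply: ler_wpM2r => //.
rewrite expr2 -mulrA [cN * _]mulrC -mulrA ler_pM2l // => hh.
nra.
Qed.
End Quad.


Section Dist.
Variable N : nat.
Local Notation n := N.+1.
Local Notation e := (@fan_adj n).

Lemma ball1E (i j : 'I_n.+1) : (j \in ball e i 1) = (j == i) || e i j.
Proof.
rewrite /= finset.in_setU finset.in_set1 finset.in_set; congr (_ || _).
apply/existsP/idP => [[y /andP[]]|h]; first by rewrite finset.in_set1 => /eqP ->.
by exists i; rewrite finset.in_set1 eqxx.
Qed.

Lemma ball2 (i j : 'I_n.+1) : j \in ball e i 2.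
Proof.
have h0 : (ord0 : 'I_n.+1) \in ball e i 1.
  rewrite ball1E; case: (eqVneq (ord0 : 'I_n.+1) i) => //= hi.
  rewrite /fan_adj /=.
  by rewrite -(inj_eq val_inj) /= eq_sym in hi; rewrite hi orbT.
rewrite /= finset.in_setU; apply/orP.
case: (eqVneq j ord0) => [->|hj]; first by left.
right; rewrite finset.in_set; apply/existsP; exists ord0; rewrite h0 /=.
rewrite /fan_adj /=.
by rewrite -(inj_eq val_inj) /= in hj; rewrite hj.
Qed.

End Dist.

Lemma gdistE N (i j : 'I_N.+2) :
  gdist (@fan_adj N.+1) i j = if i == j then 0%N else if fan_adj i j then 1%N else 2%N.
Proof.
rewrite /gdist card_ord /=.
have b0 : (j \in ball (@fan_adj N.+1) i 0) = (i == j) by rewrite /= finset.in_set1 eq_sym.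
rewrite b0; case: (eqVneq i j) => //= hij.
rewrite (@ball1E N) eq_sym (negbTE hij) /=.
case: (boolP (fan_adj i j)) => // hnot.
clear b0; case: N i j hij hnot => [|N'] i j hij hnot.
  exfalso; move: hij hnot; rewrite /fan_adj.
  case: i => [[|[|i]] hi] //; case: j => [[|[|j]] hj] //.
by move: (@ball2 N'.+1 i j) => /= ->.
Qed.


Section Fan.
Variable R : realType.
Variable N : nat.
Local Notation n := N.+1.

Definition Amx : 'M[R]_n := \matrix_(i, j) ((i.+1 == j :> nat) || (j.+1 == i :> nat))%:R.
Definition Bmx : 'M[R]_n := 2%:M + Amx.
Definition Cmx : 'M[R]_n := 1%:M + const_mx 1.
Definition Kmx (g : R) := Bmx + g *: Cmx.

Lemma qK g v : q (Kmx g) v = q Bmx v + g * q Cmx v.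
Proof. by rewrite /Kmx qD qZ. Qed.

Lemma qC v : q Cmx v = sq v + (\sum_i v 0 i) ^+ 2.
Proof. by rewrite /Cmx qD q_scalar q_const mul1r. Qed.

Lemma sq_le_qC v : sq v <= q Cmx v.
Proof. by rewrite qC lerDl sqr_ge0. Qed.

Lemma Amx_sym : Amx^T = Amx.
Proof. by apply/matrixP => i j; rewrite !mxE orbC. Qed.

Lemma Kmx_sym g : (Kmx g)^T = Kmx g.
Proof.
rewrite /Kmx /Bmx /Cmx !linearD /= linearZ /= Amx_sym !tr_scalar_mx.
by rewrite linearZ /= trmx_const.
Qed.

Definition ext (v : 'rV[R]_n) (m : nat) : R := \sum_(i < n) (i.+1 == m)%:R * v 0 i.

Lemma ext0 v : ext v 0 = 0.
Proof. by rewrite /ext big1 // => i _; rewrite mul0r. Qed.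

Lemma ext_big v m : (n < m)%N -> ext v m = 0.
Proof.
move=> hm; rewrite /ext big1 // => i _.
have : (i.+1 != m) by rewrite neq_ltn; apply/orP; left; apply: leq_ltn_trans hm.
by move/negbTE => ->; rewrite mul0r.
Qed.

Lemma ext_val v (j : 'I_n) : ext v j.+1 = v 0 j.
Proof.
rewrite /ext (bigD1 j) //= eqxx mul1r big1 ?addr0 // => i hi.
by rewrite eqSS (inj_eq val_inj) (negbTE hi) mul0r.
Qed.

Lemma ext_sum v : \sum_(m < n.+1) ext v m = \sum_i v 0 i.
Proof.
rewrite /ext exchange_big /=; apply: eq_bigr => i _.
rewrite -mulr_suml (bigD1 (lift ord0 i)) //= eqxx big1 ?addr0 ?mul1r //.
move=> m hm; move: hm; rewrite -(inj_eq val_inj) /= /bump /= add1n eq_sym => /negbTE ->.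
by [].
Qed.

Lemma vA (v : 'rV[R]_n) (j : 'I_n) : (v *m Amx) 0 j = ext v j + ext v j.+2.
Proof.
rewrite mxE /ext -big_split; apply: eq_bigr => i _ /=; rewrite mxE.
case: (eqVneq (i.+1 : nat) j) => [h|h] /=.
  rewrite -h ltn_eqF ?ltnS ?leqW // mulr1 mul1r mul0r addr0.
  by [].
rewrite mul0r add0r.
by rewrite eqSS eq_sym mulrC.
Qed.

Lemma vK (g : R) (v : 'rV[R]_n) (j : 'I_n) :
  (v *m Kmx g) 0 j = (2 + g) * ext v j.+1 + ext v j + ext v j.+2 + g * \sum_i v 0 i.
Proof.
rewrite /Kmx /Bmx /Cmx !mulmxDr -!scalemxAr !mulmxDr !mul_mx_scalar.
have hA := vA v j.
have hJ : (v *m const_mx 1) 0 j = \sum_i v 0 i.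
  by rewrite mxE; apply: eq_bigr => i _; rewrite mxE mulr1.
move: hA hJ; set X := v *m Amx; set Y := v *m const_mx 1 => hA hJ.
transitivity (2 * v 0 j + X 0 j + g * (1 * v 0 j + Y 0 j)); first by rewrite !mxE.
rewrite hA hJ -(ext_val v j); ring.
Qed.

Lemma rec_sol (x : R) (w : nat -> R) (M : nat) (c : R) : w 0 = 0 ->
  (forall m, (0 < m)%N -> (m <= M)%N -> w m.+1 = 2 * x * w m - w m.-1 + c) ->
  forall m, (m <= M.+1)%N -> w m = w 1 * u x m + c * ws x m.
Proof.
move=> w0 hr.
have H : forall m, (m <= M)%N -> w m = w 1 * u x m + c * ws x m /\ w m.+1 = w 1 * u x m.+1 + c * ws x m.+1.
  elim=> [|m IH] hm; first by rewrite w0 u0 u1 ws0 ws1; split; ring.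
  have [IH1 IH2] := IH (ltnW hm); split => //.
  rewrite hr // IH2 /= IH1 uS wsS; ring.
move=> [|m] hm; first by case: (H 0%N).
by case: (H m).
Qed.

Lemma sol22 (a b c d : R) : a * d - b * c = 0 ->
  exists w1 s : R, [/\ (w1 != 0) || (s != 0), a * w1 + b * s = 0 & c * w1 + d * s = 0].
Proof.
move=> hd.
case: (eqVneq a 0) => [a0|an0].
  case: (eqVneq b 0) => [b0|bn0].
    case: (eqVneq c 0) => [c0|cn0].
      case: (eqVneq d 0) => [d0|dn0].
        by exists 1, 0; rewrite a0 b0 c0 d0 oner_neq0; split => //; ring.
      exists d, (- c); rewrite dn0; split => //; [rewrite a0 b0| ]; ring.
    exists d, (- c); rewrite oppr_eq0 cn0 orbT; split => //; [rewrite a0 b0| ]; ring.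
  exists b, (- a); rewrite bn0; split => //; first ring.
  by rewrite -[RHS](oppr0) -hd; ring.
exists b, (- a); rewrite oppr_eq0 an0 orbT; split => //; first ring.
by rewrite -[RHS](oppr0) -hd; ring.
Qed.

Lemma lin_elim (a P Z x w1 s : R) : w1 * a + (2 * x + 2) * s * P = 0 ->
  s = w1 * P + (2 * x + 2) * s * Z ->
  (a * ((2 * x + 2) * Z - 1) - (2 * x + 2) * P ^+ 2) * w1 = 0 /\
  (a * ((2 * x + 2) * Z - 1) - (2 * x + 2) * P ^+ 2) * s = 0.
Proof.
move=> E1 E2; split.
  transitivity (((2 * x + 2) * Z - 1) * (w1 * a + (2 * x + 2) * s * P)
     - (2 * x + 2) * P * (w1 * P + (2 * x + 2) * s * Z - s)); first ring.
  by rewrite E1 -E2 subrr; ring.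
transitivity (a * (w1 * P + (2 * x + 2) * s * Z - s) - P * (w1 * a + (2 * x + 2) * s * P)); first ring.
by rewrite E1 -E2 subrr; ring.
Qed.

Lemma sing_root (x : R) (v : 'rV[R]_n) : v != 0 -> v *m Kmx (- 2 * x - 2) = 0 ->
  root (phi R n) x.
Proof.
move=> vn0 hK.
set s := \sum_i v 0 i.
set c := (2 * x + 2) * s.
have hr : forall m, (0 < m)%N -> (m <= n)%N -> ext v m.+1 = 2 * x * ext v m - ext v m.-1 + c.
  move=> m m0 mn.
  have jlt : (m.-1 < n)%N by rewrite prednK.
  have := vK (- 2 * x - 2) v (Ordinal jlt).
  rewrite hK mxE /= prednK // => E.
  apply/eqP; rewrite -subr_eq0; apply/eqP; rewrite [RHS]E /c /s; ring.
have hw := rec_sol (ext0 v) hr.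
have E1 : ext v 1 * u x n.+1 + c * ws x n.+1 = 0 by rewrite -hw // ext_big.
have E2 : s = ext v 1 * Pc x N + c * Zc x N.
  rewrite /s -ext_sum (eq_bigr (fun m : 'I_n.+1 => ext v 1 * u x m + c * ws x m)).
    by rewrite big_split /= -!mulr_sumr sum_u_ws.
  by move=> m _; rewrite hw // ltnW.
have hdet : detc x N = 0.
  apply/eqP; apply: contraT => hd.
  have [h1 h2] := @lin_elim (u x N.+2) (Pc x N) (Zc x N) x (ext v 1) s E1 E2.
  move/eqP: h1; rewrite mulf_eq0 /detc (negbTE hd) /= => /eqP w10.
  move/eqP: h2; rewrite mulf_eq0 /detc (negbTE hd) /= => /eqP s0.
  exfalso; move/negP: vn0; apply; apply/eqP; apply/matrixP => i j; rewrite (ord1 i) mxE -ext_val hw; last by rewrite ltnS ltnW.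
  by rewrite w10 /c s0 mulr0 !mul0r addr0.
have := key x N; rewrite hdet mulr0 => /eqP; rewrite eq_sym mulf_eq0 => /orP[|].
  by rewrite oppr_eq0 pnatr_eq0.
by [].
Qed.

Lemma root_sing (y : R) : y != 1 -> root (phi R n) y ->
  exists2 v : 'rV[R]_n, v != 0 & v *m Kmx (- 2 * y - 2) = 0.
Proof.
move=> y1 hr.
have hdet : detc y N = 0.
  have := key y N; move/rootP: hr => ->; rewrite mulr0 => /eqP.
  rewrite mulf_eq0 => /orP[|/eqP //].
  by rewrite mulf_eq0 pnatr_eq0 /= sqrf_eq0 subr_eq0 (negbTE y1).
have hd' : u y N.+2 * ((2 * y + 2) * Zc y N - 1) - (2 * y + 2) * Pc y N * Pc y N = 0.
  by rewrite -hdet /detc; ring.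
have [w1 [s [hnt e1 e2]]] := sol22 hd'.
set c := (2 * y + 2) * s.
pose W m := w1 * u y m + c * ws y m.
pose v : 'rV[R]_n := \row_j W j.+1.
have hWn : W n.+1 = 0 by rewrite /W /c -[RHS]e1 /Pc; ring.
have hext : forall m, (m <= n.+1)%N -> ext v m = W m.
  move=> [|m] hm; first by rewrite ext0 /W u0 ws0; ring.
  case: (ltnP m n) => hmn.
    by rewrite (ext_val v (Ordinal hmn)) mxE.
  have -> : m = n by apply/eqP; rewrite eqn_leq hmn -ltnS hm.
  by rewrite ext_big // hWn.
have hs : \sum_i v 0 i = s.
  rewrite -ext_sum (eq_bigr (fun m : 'I_n.+1 => W m)); last first.
    by move=> m _; rewrite hext // ltnW.
  rewrite /W big_split /= -!mulr_sumr sum_u_ws.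
  apply/eqP; rewrite -subr_eq0; apply/eqP; rewrite -[RHS]e2 /c /Pc /Zc; ring.
exists v.
  apply/negP => /eqP v0; move: hnt.
  have s0 : s = 0 by rewrite -hs v0 big1 // => i _; rewrite mxE.
  have : v 0 ord0 = 0 by rewrite v0 mxE.
  rewrite mxE /W u1 ws1 s0 /c mulr0 addr0 mulr1 => ->.
  by rewrite eqxx.
apply/matrixP => i j; have hj := ltn_ord j.
rewrite (ord1 i) [RHS]mxE vK hs !hext; try lia.
rewrite /W uS wsS /c; ring.
Qed.
End Fan.


Section Bridge.
Variable R : realType.
Variable N : nat.
Local Notation n := N.+1.
Local Notation D := (fan_distmx R n).

Lemma D00 : D ord0 ord0 = 0.
Proof. by rewrite mxE gdistE eqxx. Qed.

Lemma D0l (j : 'I_n) : D ord0 (lift ord0 j) = 1.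
Proof. by rewrite mxE gdistE. Qed.

Lemma Dl0 (i : 'I_n) : D (lift ord0 i) ord0 = 1.
Proof. by rewrite mxE gdistE. Qed.

Lemma Dll (i j : 'I_n) : D (lift ord0 i) (lift ord0 j) =
  (2 *: const_mx 1 - (Bmx R N)) i j.
Proof.
rewrite !mxE gdistE (inj_eq (@lift_inj _ ord0)) /fan_adj /=.
case: (eqVneq i j) => [->|hij] /=.
  by rewrite (gtn_eqF (ltnSn j)) /= mulr1n; ring.
rewrite mulr0n /bump /= !add1n !eqSS.
rewrite (eq_sym (j : nat)) (eq_sym (i : nat)) orbC.
by case: (_ || _); rewrite /=; ring.
Qed.

Lemma qsub (M1 M2 : 'M[R]_n) v : q (M1 - M2) v = q M1 v - q M2 v.
Proof.
rewrite !qE -sumrB; apply: eq_bigr => i _; rewrite -sumrB; apply: eq_bigr => j _.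
by rewrite !mxE mulrBr mulrBl.
Qed.

Lemma f_quad (f : 'cV[R]_n.+1) : \sum_i f i 0 = 0 ->
  (f^T *m f) 0 0 = q (Cmx R N) (\row_k f (lift ord0 k) 0) /\
  (f^T *m D *m f) 0 0 = - q (Bmx R N) (\row_k f (lift ord0 k) 0).
Proof.
move=> hsum.
set v := \row_k f (lift ord0 k) 0.
have hv k : v 0 k = f (lift ord0 k) 0 by rewrite mxE.
set t := \sum_k v 0 k.
have ht : f ord0 0 = - t.
  move: hsum; rewrite big_ord_recl (eq_bigr (fun k => v 0 k)); last by move=> k _; rewrite hv.
  by rewrite -/t => /eqP; rewrite addr_eq0 => /eqP.
split.
  rewrite qC -/t /sq mxE big_ord_recl !mxE ht.
  rewrite (eq_bigr (fun k => v 0 k ^+ 2)); last by move=> k _; rewrite !mxE expr2.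
  by rewrite mulNr mulrN opprK -expr2 addrC.
have -> : (f^T *m D *m f) = (f^T *m D *m f^T^T) by rewrite trmxK.
rewrite -/(q D f^T) qE big_ord_recl /=.
rewrite (eq_bigr (fun i : 'I_n => f^T 0 (lift ord0 i) * D (lift ord0 i) ord0 * f^T 0 ord0 +
   \sum_(j < n) v 0 i * (2 *: const_mx 1 - Bmx R N) i j * v 0 j)); last first.
  move=> i _; rewrite big_ord_recl; congr (_ + _); apply: eq_bigr => j _.
  by rewrite Dll !mxE.
rewrite big_split /= -(qE (2 *: const_mx 1 - Bmx R N) v) qsub qZ q_const -/t.
rewrite (eq_bigr (fun i : 'I_n => v 0 i * f ord0 0)); last first.
  by move=> i _; rewrite Dl0 !mxE mulr1.
rewrite big_ord_recl D00 /=.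
rewrite (eq_bigr (fun j : 'I_n => f ord0 0 * v 0 j)); last first.
  by move=> j _; rewrite D0l !mxE mulr1.
rewrite -mulr_sumr -mulr_suml -/t ht !mxE ht; ring.
Qed.

Definition Sp : set R := [set y | exists v : 'rV[R]_n, q (Cmx R N) v = 1 /\ y = - q (Bmx R N) v].

Lemma S_eq : [set y | exists f : 'cV[R]_n.+1,
   [/\ (f^T *m f) 0 0 = 1, \sum_i f i 0 = 0 & y = (f^T *m D *m f) 0 0]]%classic = Sp.
Proof.
apply/seteqP; split => y /=.
  move=> [f [h1 h2 ->]]; have [a b] := f_quad h2.
  by exists (\row_k f (lift ord0 k) 0); split; [rewrite -a | rewrite b].
move=> [v [h1 ->]].
pose f : 'cV[R]_n.+1 := \col_i (oapp (fun k => v 0 k) (- \sum_k v 0 k) (unlift ord0 i)).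
have hf0 : f ord0 0 = - \sum_k v 0 k by rewrite mxE unlift_none.
have hfl k : f (lift ord0 k) 0 = v 0 k by rewrite mxE liftK.
have hsum : \sum_i f i 0 = 0.
  by rewrite big_ord_recl hf0 (eq_bigr (fun k => v 0 k) (fun k _ => hfl k)) addNr.
have hvv : \row_k f (lift ord0 k) 0 = v.
  by apply/matrixP => i k; rewrite (ord1 i) mxE hfl.
exists f; have [a b] := f_quad hsum; rewrite hvv in a b.
by split => //; rewrite a.
Qed.

Lemma Sp_norm v : 0 < q (Cmx R N) v -> Sp (- q (Bmx R N) v / q (Cmx R N) v).
Proof.
move=> hc; set c := q (Cmx R N) v in hc *.
have sc : 0 < Num.sqrt c by rewrite sqrtr_gt0.
exists ((Num.sqrt c)^-1 *: v); rewrite !qvZ exprVn sqr_sqrtr ?ltW //; split.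
  by rewrite mulVf // gt_eqF.
by rewrite mulNr mulrC.
Qed.

Lemma Sp_m1 : Sp (-1).
Proof.
pose v : 'rV[R]_n := \row_j (j == ord0)%:R.
have qd (M : 'M[R]_n) : q M v = M ord0 ord0.
  rewrite qE (bigD1 ord0) //= [X in _ + X]big1 ?addr0; last first.
    by move=> i hi; apply: big1 => j _; rewrite !mxE (negbTE hi) /= !mul0r.
  rewrite (bigD1 ord0) //= [X in _ + X]big1 ?addr0; last first.
    by move=> j hj; rewrite !mxE (negbTE hj) /= mulr0.
  by rewrite !mxE eqxx /= mul1r mulr1.
have hB : q (Bmx R N) v = 2 by rewrite qd /Bmx !mxE /=; ring.
have hC : q (Cmx R N) v = 2 by rewrite qd /Cmx !mxE /=; ring.
have := @Sp_norm v; rewrite hB hC => h.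
have -> : -1 = - 2 / 2 :> R by field.
by apply: h; rewrite ltr0n.
Qed.

Lemma Sp_ub : ubound Sp (\sum_i \sum_j `|Bmx R N i j|).
Proof.
move=> y [v [h1 ->]].
have hb := q_bound (Bmx R N) v.
have hs := sq_le_qC v; rewrite h1 in hs.
have c0 : 0 <= \sum_i \sum_j `|Bmx R N i j| by apply: sumr_ge0 => i _; apply: sumr_ge0.
apply: le_trans (ler_norm _) _; rewrite normrN.
apply: le_trans hb _; rewrite -[leRHS]mulr1; exact: ler_wpM2l.
Qed.
End Bridge.


Section Main.
Variable R : realType.
Variable N : nat.
Local Notation n := N.+1.
Local Open Scope classical_set_scope.

Lemma q0 (M : 'M[R]_n) : q M 0 = 0.
Proof. by rewrite /q !mul0mx mxE. Qed.

Lemma qC_pos (v : 'rV[R]_n) : v != 0 -> 0 < q (Cmx R N) v.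
Proof.
move=> vn0; apply: (lt_le_trans _ (sq_le_qC v)).
rewrite lt0r sq_ge0 andbT; apply: contra vn0 => /eqP h.
by apply/eqP; apply: sq_eq0.
Qed.

Lemma main_N : exists alpha : R,
    [/\ root (phi R n) alpha,
        (forall x : R, root (phi R n) x -> alpha <= x)
      & QEC (fan_distmx R n) = - 2%:R * alpha - 2%:R].
Proof.
rewrite /QEC S_eq.
set gs := sup (@Sp R N).
have hne : (@Sp R N) !=set0 by exists (-1); exact: Sp_m1.
have hs : has_sup (@Sp R N) by split => //; eexists; exact: Sp_ub.
have ub := sup_upper_bound hs; rewrite -/gs in ub.
have gm1 : -1 <= gs by apply: ub; exact: Sp_m1.
have psd : forall v, 0 <= q (@Kmx R N gs) v.
  move=> v; case: (eqVneq v 0) => [->|vn0]; first by rewrite q0.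
  have hc := qC_pos vn0.
  have := ub _ ((@Sp_norm R N _ hc)); rewrite qK ler_pdivrMr // => h.
  lra.
have nunit : ~~ (@Kmx R N gs \in unitmx).
  apply/negP => hu; have [eps he hm] := margin (@Kmx_sym R N gs) psd hu.
  set cC := \sum_i \sum_j `|Cmx R N i j|.
  have cC0 : 0 <= cC by apply: sumr_ge0 => i _; apply: sumr_ge0.
  set del := eps / (cC + 1).
  have dpos : 0 < del by rewrite divr_gt0 //; lra.
  have : gs <= gs - del.
    apply: ge_sup => // y [v [h1 ->]].
    have := hm v; rewrite qK h1 mulr1 => h.
    have hb := q_bound (Cmx R N) v; rewrite h1 normr1 -/cC in hb.
    have hsv := sq_ge0 v.
    have h1' : 1 <= sq v * (cC + 1) by nra.
    have hd : del <= eps * sq v.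
      rewrite /del ler_pdivrMr; last lra.
      rewrite -mulrA; apply: ler_peMr => //; exact: ltW.
    lra.
  lra.
move: nunit; rewrite unitmxE unitfE negbK => /det0P [v vn0 vK].
set x := - (gs + 2) / 2.
have gx : - 2 * x - 2 = gs by rewrite /x; field.
have rx : root (phi R n) x by apply: (sing_root vn0); rewrite gx.
exists x; split => //.
move=> y hy; case: (eqVneq y 1) => [->|y1].
  by rewrite /x; lra.
have [w wn0 wK] := root_sing y1 hy.
have hq : q (@Kmx R N (- 2 * y - 2)) w = 0 by rewrite /q wK mul0mx mxE.
rewrite qK in hq.
have hc := qC_pos wn0.
have := ub _ ((@Sp_norm R N _ hc)).
have -> : - q (Bmx R N) w / q (Cmx R N) w = - 2 * y - 2.
  apply/eqP; rewrite -subr_eq0; apply/eqP.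
  have -> : - q (Bmx R N) w / q (Cmx R N) w - (- 2 * y - 2) =
     - (q (Bmx R N) w + (- 2 * y - 2) * q (Cmx R N) w) / q (Cmx R N) w.
    by field; exact: lt0r_neq0.
  by rewrite hq oppr0 mul0r.
rewrite -gx; lra.
Qed.
End Main.


Unset Implicit Arguments.
Theorem mainTheorem9 (R : realType) (n : nat) (hn : (1 <= n)%N) :
  exists alpha : R,
    [/\ root (phi R n) alpha,
        (forall x : R, root (phi R n) x -> alpha <= x)
      & QEC (fan_distmx R n) = - 2%:R * alpha - 2%:R].
Proof.
case: n hn => [//|N] _.
exact: main_N.
Qed.
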